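(* As $N\to\infty$, $$\frac{1}{N}\sum_{n\le N} R_3(n)\sim \frac{1}{2}\log^2 N .$$
   Context: For a positive integer $n$, $R_3(n)$ denotes the number of ordered triples $(x,y,z)$ of positive integers with $n = xyz + x + y + z$. *)

(* Defs.v *)
From Stdlib Require Import Reals Arith List.
Import ListNotations.
Open Scope R_scope.

(* R_3(n) = #{(x,y,z) in Z_{>0}^3 : n = xyz + x + y + z}.
   Any solution has 1 <= x,y,z <= n, so it suffices to range over [1..n]. *)
Definition R3 (n : nat) : nat :=
  list_sum (map (fun x =>
    list_sum (map (fun y =>
      list_sum (map (fun z =>
        if Nat.eqb n (x * y * z + x + y + z)%nat then 1%nat else 0%nat)
        (seq 1 n)))
      (seq 1 n)))
    (seq 1 n)).

Definition sumR3 (N : nat) : nat := list_sum (map R3 (seq 1 N)).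

(* Main.v *)
Require Import Defs.
From Stdlib Require Import Reals.
From Stdlib Require Import Arith List Lia Lra ZArith.
Open Scope R_scope.
Section NatPart.
Local Open Scope nat_scope.

Lemma ls_ext (f g : nat -> nat) l : (forall x, In x l -> f x = g x) ->
  list_sum (map f l) = list_sum (map g l).
Proof. intros; f_equal; apply map_ext_in; auto. Qed.

Lemma ls_le (f g : nat -> nat) l : (forall x, In x l -> f x <= g x) ->
  list_sum (map f l) <= list_sum (map g l).
Proof. induction l; simpl; intros H; [lia|].
 pose proof (H a (or_introl eq_refl)). pose proof (IHl (fun x h => H x (or_intror h))). lia. Qed.

Lemma ls_zero (f : nat -> nat) l : (forall x, In x l -> f x = 0) -> list_sum (map f l) = 0.
Proof. induction l; simpl; intros H; auto. rewrite H, IHl; auto. Qed.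

Lemma ls_plus (f g : nat -> nat) l :
  list_sum (map (fun x => f x + g x) l) = list_sum (map f l) + list_sum (map g l).
Proof. induction l; simpl; auto. rewrite IHl; lia. Qed.

Lemma ls_swap (g : nat -> nat -> nat) l1 l2 :
  list_sum (map (fun a => list_sum (map (fun b => g a b) l2)) l1) =
  list_sum (map (fun b => list_sum (map (fun a => g a b) l1)) l2).
Proof. induction l1; simpl.
 - symmetry; apply ls_zero; auto.
 - rewrite IHl1, <- ls_plus. reflexivity. Qed.

Lemma ls_trunc (f : nat -> nat) K N : K <= N -> (forall y, K < y -> f y = 0) ->
  list_sum (map f (seq 1 N)) = list_sum (map f (seq 1 K)).
Proof. intros HKN Hf. induction N.
 - assert (K = 0) by lia. subst; auto.
 - destruct (Nat.eq_dec K (S N)). subst; auto.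
   rewrite seq_S, map_app, list_sum_app, IHN by lia. simpl. rewrite Hf by lia. lia. Qed.

Lemma count_eq m N : 1 <= m ->
  list_sum (map (fun n => if Nat.eqb n m then 1 else 0) (seq 1 N)) = if m <=? N then 1 else 0.
Proof. intros Hm. induction N.
 - simpl. destruct (m <=? 0) eqn:E; auto. apply Nat.leb_le in E; lia.
 - rewrite seq_S, map_app, list_sum_app, IHN. cbn [map list_sum fold_right Nat.add].
   destruct (m <=? N) eqn:E1, (m <=? S N) eqn:E2, (Nat.eqb (S N) m) eqn:E3;
   rewrite ?Nat.leb_le, ?Nat.leb_gt, ?Nat.eqb_eq, ?Nat.eqb_neq in *; lia. Qed.

Lemma count_div c M K : 1 <= c ->
  list_sum (map (fun z => if c * z <=? M then 1 else 0) (seq 1 K)) = Nat.min K (M / c).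
Proof. intros Hc. induction K.
 - simpl. auto.
 - rewrite seq_S, map_app, list_sum_app, IHK. cbn [map list_sum fold_right Nat.add].
   assert (Hq : forall q, c * q <= M <-> q <= M / c).
   { intros q. split; intros.
     - apply Nat.div_le_lower_bound; lia.
     - pose proof (Nat.div_mod M c ltac:(lia)). pose proof (Nat.mod_upper_bound M c ltac:(lia)). nia. }
   destruct (c * S K <=? M) eqn:E; rewrite ?Nat.leb_le, ?Nat.leb_gt in E.
   + apply Hq in E. lia.
   + assert (~ S K <= M / c) by (rewrite <- Hq; lia). lia. Qed.

Definition fxyz (x y z : nat) := x*y*z + x + y + z.

Lemma e_zero n x y z : n < x + y + z ->
  (if Nat.eqb n (x*y*z + x + y + z) then 1 else 0) = 0.
Proof. intros. destruct (Nat.eqb n _) eqn:E; auto. apply Nat.eqb_eq in E; lia. Qed.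

Definition S3 N := list_sum (map (fun x => list_sum (map (fun y => list_sum (map (fun z =>
  if x*y*z + x + y + z <=? N then 1 else 0) (seq 1 N))) (seq 1 N))) (seq 1 N)).

Lemma sumR3_S3 N : sumR3 N = S3 N.
Proof.
 unfold sumR3, R3, S3.
 rewrite (ls_ext _ (fun n => list_sum (map (fun x => list_sum (map (fun y => list_sum (map (fun z =>
   if Nat.eqb n (x*y*z + x + y + z) then 1 else 0) (seq 1 N))) (seq 1 N))) (seq 1 N)))).
 2:{ intros n Hn. apply in_seq in Hn.
   symmetry. rewrite (ls_trunc _ n N) by (try lia; intros; apply ls_zero; intros; apply ls_zero; intros; apply e_zero; lia).
   apply ls_ext; intros x Hx. apply in_seq in Hx.
   rewrite (ls_trunc _ n N) by (try lia; intros; apply ls_zero; intros; apply e_zero; lia).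
   apply ls_ext; intros y Hy. apply in_seq in Hy.
   rewrite (ls_trunc _ n N) by (try lia; intros; apply e_zero; lia). reflexivity. }
 rewrite ls_swap. apply ls_ext; intros x Hx.
 rewrite ls_swap. apply ls_ext; intros y Hy.
 rewrite ls_swap. apply ls_ext; intros z Hz. apply in_seq in Hz.
 apply count_eq. lia.
Qed.

Lemma count_shift c M K : 1 <= c ->
  list_sum (map (fun z => if c * (z+1) <=? M then 1 else 0) (seq 1 K)) + (if c <=? M then 1 else 0)
  = Nat.min (S K) (M / c).
Proof. intros Hc. rewrite <- (count_div c M (S K) Hc).
 change (seq 1 (S K)) with (1 :: seq 2 K).
 assert (E : seq 2 K = map S (seq 1 K)) by (rewrite seq_shift; reflexivity).
 rewrite E.
 cbn [map list_sum fold_right]. rewrite map_map, Nat.mul_1_r.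
 rewrite (ls_ext (fun z => if c * (z+1) <=? M then 1 else 0) (fun x => if c * S x <=? M then 1 else 0)). unfold list_sum; lia.
 intros; rewrite Nat.add_1_r; auto. Qed.

Definition Dn N := list_sum (map (fun x => list_sum (map (fun y => N / x / y) (seq 1 N))) (seq 1 N)).
Definition En N := list_sum (map (fun x => list_sum (map (fun y => S N / (x+1) / (y+1) - 1) (seq 1 N))) (seq 1 N)).

Lemma S3_upper N : S3 N <= Dn N.
Proof. unfold S3, Dn. apply ls_le; intros x Hx; apply in_seq in Hx.
 apply ls_le; intros y Hy; apply in_seq in Hy.
 rewrite Nat.Div0.div_div.
 rewrite <- (Nat.min_r N (N / (x*y))) by (apply Nat.Div0.div_le_upper_bound; assert (1 <= x*y) by nia; nia).
 rewrite <- (count_div (x*y) N N) by nia.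
 apply ls_le; intros z Hz.
 destruct (x*y*z + x + y + z <=? N) eqn:E; destruct (x*y*z <=? N) eqn:E2; auto.
 rewrite Nat.leb_le, Nat.leb_gt in *. lia. Qed.

Lemma S3_lower N : En N <= S3 N.
Proof. unfold S3, En. apply ls_le; intros x Hx; apply in_seq in Hx.
 apply ls_le; intros y Hy; apply in_seq in Hy.
 rewrite Nat.Div0.div_div.
 set (c := (x+1)*(y+1)).
 pose proof (count_shift c (S N) N ltac:(unfold c; nia)) as HC.
 rewrite Nat.min_r in HC.
 2:{ apply Nat.Div0.div_le_upper_bound. unfold c. assert (1 <= (x+1)*(y+1)) by nia. nia. }
 assert (list_sum (map (fun z => if c * (z+1) <=? S N then 1 else 0) (seq 1 N)) <=
    list_sum (map (fun z => if x*y*z + x + y + z <=? N then 1 else 0) (seq 1 N))).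
 { apply ls_le; intros z Hz.
   destruct (x*y*z + x + y + z <=? N) eqn:E; destruct (c * (z+1) <=? S N) eqn:E2; auto.
   rewrite Nat.leb_le, Nat.leb_gt in *. unfold c in *. nia. }
 destruct (c <=? S N); lia. Qed.
End NatPart.

Lemma ln_le_sub1 : forall y, 0 < y -> ln y <= y - 1.
Proof. intros y Hy. pose proof (exp_ineq1_le (ln y)). rewrite exp_ln in H; lra. Qed.

Lemma ln_le_mono : forall x y, 0 < x -> x <= y -> ln x <= ln y.
Proof. intros x y Hx Hxy. destruct (Rle_lt_or_eq_dec _ _ Hxy) as [H|H].
 left; apply ln_increasing; auto. subst; lra. Qed.

Lemma ln_div' : forall x y, 0 < x -> 0 < y -> ln (x / y) = ln x - ln y.
Proof. intros. unfold Rdiv. rewrite ln_mult, ln_Rinv; try lra.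
 apply Rinv_0_lt_compat; auto. Qed.

Lemma ln_nonneg : forall x, 1 <= x -> 0 <= ln x.
Proof. intros. rewrite <- ln_1. apply ln_le_mono; lra. Qed.

Lemma ln_0 : ln 0 = 0.
Proof. unfold ln. destruct (Rlt_dec 0 0) as [H|H]. exfalso; lra. reflexivity. Qed.

Lemma ln_step_bounds : forall x, 1 <= x ->
  / (x+1) <= ln (x+1) - ln x <= / x.
Proof. intros x Hx. split.
 - pose proof (ln_le_sub1 (x/(x+1)) ltac:(apply Rdiv_lt_0_compat; lra)) as H.
   rewrite ln_div' in H by (try apply Rdiv_lt_0_compat; lra).
   assert (x/(x+1) - 1 = - / (x+1)) by (field; lra). lra.
 - pose proof (ln_le_sub1 ((x+1)/x) ltac:(apply Rdiv_lt_0_compat; lra)) as H.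
   rewrite ln_div' in H by (try apply Rdiv_lt_0_compat; lra).
   assert ((x+1)/x - 1 = / x) by (field; lra). lra.
Qed.

Definition rsum (f : nat -> R) (l : list nat) : R :=
  fold_right (fun a acc => f a + acc) 0 l.

Lemma rsum_app f l1 l2 : rsum f (l1 ++ l2) = rsum f l1 + rsum f l2.
Proof. induction l1; simpl; [lra|]. rewrite IHl1; lra. Qed.

Lemma rsum_seqS f n : rsum f (seq 1 (S n)) = rsum f (seq 1 n) + f (S n).
Proof. rewrite seq_S, rsum_app. simpl. lra. Qed.

Lemma rsum_le f g l : (forall x, In x l -> f x <= g x) -> rsum f l <= rsum g l.
Proof. induction l; simpl; intros H; [lra|].
 pose proof (H a (or_introl eq_refl)). pose proof (IHl (fun x h => H x (or_intror h))). lra. Qed.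

Lemma rsum_ext f g l : (forall x, In x l -> f x = g x) -> rsum f l = rsum g l.
Proof. intros. apply Rle_antisym; apply rsum_le; intros; rewrite H; auto; lra. Qed.

Lemma rsum_plus f g l : rsum (fun x => f x + g x) l = rsum f l + rsum g l.
Proof. induction l; simpl; [lra|]. rewrite IHl; lra. Qed.

Lemma rsum_scal c f l : rsum (fun x => c * f x) l = c * rsum f l.
Proof. induction l; simpl; [lra|]. rewrite IHl; lra. Qed.

Lemma rsum_minus f g l : rsum (fun x => f x - g x) l = rsum f l - rsum g l.
Proof. induction l; simpl; [lra|]. rewrite IHl; lra. Qed.

Lemma rsum_const c l : rsum (fun _ => c) l = INR (length l) * c.
Proof. induction l; simpl length; simpl rsum; [simpl; lra|]. rewrite IHl, S_INR; lra. Qed.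

Lemma rsum_map f g l : rsum f (map g l) = rsum (fun x => f (g x)) l.
Proof. induction l; simpl; [lra|]. rewrite IHl; lra. Qed.

Lemma rsum_shift f n : rsum f (seq 1 (S n)) = f 1%nat + rsum (fun x => f (S x)) (seq 1 n).
Proof. simpl seq. simpl rsum. rewrite <- seq_shift, rsum_map. reflexivity. Qed.

Lemma INR_list_sum (f : nat -> nat) l : INR (list_sum (map f l)) = rsum (fun x => INR (f x)) l.
Proof. induction l; simpl; [reflexivity|]. rewrite plus_INR, IHl. reflexivity. Qed.

Lemma in_seq1 x n : In x (seq 1 n) -> (1 <= x <= n)%nat.
Proof. rewrite in_seq. lia. Qed.

Definition H (n : nat) := rsum (fun a => / INR a) (seq 1 n).
Definition G (n : nat) := rsum (fun a => ln (INR a) / INR a) (seq 1 n).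

Lemma H_upper n : (1 <= n)%nat -> H n <= 1 + ln (INR n).
Proof. induction n; intros Hn; [lia|]. destruct n.
 - unfold H. simpl. rewrite ln_1. lra.
 - unfold H in *. rewrite rsum_seqS. specialize (IHn ltac:(lia)).
   pose proof (ln_step_bounds (INR (S n))) as B.
   assert (1 <= INR (S n)) by (rewrite S_INR; pose proof (pos_INR n); lra).
   specialize (B H0). rewrite (S_INR (S n)). lra.
Qed.

Lemma H_lower n : ln (INR n + 1) <= H n.
Proof. induction n.
 - unfold H. simpl. replace (0+1) with 1 by lra. rewrite ln_1. lra.
 - unfold H in *. rewrite rsum_seqS.
   pose proof (ln_step_bounds (INR (S n))) as B.
   assert (1 <= INR (S n)) by (rewrite S_INR; pose proof (pos_INR n); lra).
   specialize (B H0). rewrite S_INR in *. lra.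
Qed.

Lemma G_bounds n : (1 <= n)%nat ->
  G n <= ln (INR n) ^ 2 / 2 + 1 - / INR n /\ ln (INR n) ^ 2 / 2 - H n <= G n.
Proof. induction n; intros Hn; [lia|]. destruct n.
 - unfold G, H. simpl. rewrite ln_1. lra.
 - specialize (IHn ltac:(lia)). destruct IHn as [IH1 IH2].
   unfold G, H in *. rewrite !(rsum_seqS _ (S n)).
   set (x := INR (S n)) in *.
   assert (Hx : 1 <= x) by (unfold x; rewrite S_INR; pose proof (pos_INR n); lra).
   rewrite (S_INR (S n)). fold x.
   pose proof (ln_step_bounds x Hx) as [B1 B2].
   set (u := ln (x+1)) in *. set (v := ln x) in *.
   set (a := / x) in *. set (b := / (x+1)) in *.
   assert (Ha : a * x = 1) by (unfold a; field; lra).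
   assert (Hb : b * (x+1) = 1) by (unfold b; field; lra).
   assert (Hb0 : 0 < b) by (unfold b; apply Rinv_0_lt_compat; lra).
   assert (Ha0 : 0 < a) by (unfold a; apply Rinv_0_lt_compat; lra).
   assert (Hab : a - b = a * b) by (unfold a, b; field; lra).
   assert (Hb2 : a <= 2 * b) by nra.
   assert (Hu : 0 <= u) by (unfold u; apply ln_nonneg; lra).
   assert (Hux : u <= x) by (unfold u; pose proof (ln_le_sub1 (x+1)); lra).
   set (d := u - v) in *.
   assert (Hv : v = u - d) by (unfold d; ring).
   assert (P1 : b * u <= d * u) by nra.
   assert (P2 : d * d <= a * a) by nra.
   assert (P3 : a * a <= 2 * a * b) by nra.
   assert (P4 : d * u <= a * u) by nra.
   assert (P5 : a * u <= 1) by nra.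
   assert (P6 : a * b * u <= b) by nra.
   unfold Rdiv. fold b. split.
   + assert (IH1' : rsum (fun a0 : nat => ln (INR a0) * / INR a0) (seq 1 (S n)) <= (u-d)^2 * /2 + 1 - a) by (rewrite <- Hv; exact IH1).
     nra.
   + assert (IH2' : (u-d)^2 * /2 - rsum (fun a : nat => / INR a) (seq 1 (S n)) <= rsum (fun a0 : nat => ln (INR a0) * / INR a0) (seq 1 (S n))) by (rewrite <- Hv; exact IH2).
     nra.
Qed.

Lemma floor_bounds a b : (1 <= b)%nat ->
  INR (a / b) * INR b <= INR a /\ INR a < (INR (a / b) + 1) * INR b.
Proof. intros Hb. pose proof (Nat.div_mod a b ltac:(lia)). pose proof (Nat.mod_upper_bound a b ltac:(lia)).
 split.
 - rewrite <- mult_INR. apply le_INR. nia.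
 - rewrite <- S_INR, <- mult_INR. apply lt_INR. nia. Qed.

Lemma floor_le a b : (1 <= b)%nat -> INR (a / b) <= INR a / INR b.
Proof. intros Hb. destruct (floor_bounds a b Hb) as [H1 _].
 assert (0 < INR b) by (apply lt_0_INR; lia).
 apply (Rmult_le_reg_r (INR b)); auto. unfold Rdiv. rewrite Rmult_assoc, Rinv_l; lra. Qed.

Lemma floor_gt a b : (1 <= b)%nat -> INR a / INR b - 1 < INR (a / b).
Proof. intros Hb. destruct (floor_bounds a b Hb) as [_ H1].
 assert (0 < INR b) by (apply lt_0_INR; lia).
 assert (INR a / INR b < INR (a/b) + 1); [|lra].
 apply (Rmult_lt_reg_r (INR b)); auto. unfold Rdiv. rewrite Rmult_assoc, Rinv_l; lra. Qed.

Lemma UB2 K N : (K <= N)%nat ->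
  INR (list_sum (map (fun y => K / y) (seq 1 N))%nat) <= INR K * (1 + ln (INR K)).
Proof. intros HK.
 rewrite (ls_trunc _ K N HK) by (intros; apply Nat.div_small; lia).
 rewrite INR_list_sum.
 apply Rle_trans with (rsum (fun y => INR K * / INR y) (seq 1 K)).
 - apply rsum_le. intros y Hy. apply in_seq1 in Hy. apply floor_le; lia.
 - rewrite rsum_scal. fold (H K). destruct K.
   + simpl. lra.
   + pose proof (H_upper (S K) ltac:(lia)). pose proof (pos_INR (S K)). nra.
Qed.

Lemma LB2 K N : (K <= S N)%nat ->
  INR K * ln (INR K) - 3 * INR K <= INR (list_sum (map (fun y => K / (y+1) - 1) (seq 1 N))%nat).
Proof. intros HK. destruct K as [|k].
 - simpl INR. pose proof (pos_INR (list_sum (map (fun y => 0 / (y+1) - 1) (seq 1 N))%nat)). lra.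
 - rewrite (ls_trunc _ k N ltac:(lia)) by (intros; rewrite Nat.div_small by lia; lia).
   rewrite INR_list_sum.
   apply Rle_trans with (rsum (fun y => INR (S k) * / INR (S y) - 2) (seq 1 k)).
   2:{ apply rsum_le. intros y Hy. apply in_seq1 in Hy.
       pose proof (floor_gt (S k) (y+1) ltac:(lia)) as F.
       rewrite Nat.add_1_r in *.
       destruct (Nat.eq_dec (S k / S y) 0) as [E|E].
       + rewrite E in *. simpl INR in *. unfold Rdiv in F. lra.
       + rewrite minus_INR by lia. change (INR 1) with 1. unfold Rdiv in F. lra. }
   rewrite rsum_minus, rsum_scal, rsum_const, length_seq.
   pose proof (rsum_shift (fun a => / INR a) k) as Sh. cbv beta in Sh. fold (H (S k)) in Sh. change (INR 1) with 1 in Sh.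
   rewrite Rinv_1 in Sh.
   pose proof (H_lower (S k)) as HL.
   assert (ln (INR (S k)) <= ln (INR (S k) + 1)) by (pose proof (pos_INR k); apply ln_le_mono; rewrite S_INR; lra).
   pose proof (pos_INR (S k)). rewrite S_INR in *. nra.
Qed.

Lemma PHI K t : 0 < t -> INR K <= t < INR K + 1 ->
  t * ln t - 5 * t <= INR K * ln (INR K) - 3 * INR K.
Proof. intros Ht [H1 H2]. destruct K as [|k].
 - simpl in *. assert (ln t <= 0) by (pose proof (ln_le_sub1 t Ht); lra).
   rewrite Rmult_0_l. nra.
 - set (k1 := INR (S k)) in *.
   assert (Hk : 1 <= k1) by (unfold k1; rewrite S_INR; pose proof (pos_INR k); lra).
   assert (Hk2 : t / 2 <= k1) by lra.
   assert (L1 : ln (t/2) <= ln k1) by (apply ln_le_mono; lra).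
   rewrite ln_div' in L1 by lra.
   assert (L2 : ln 2 <= 1) by (pose proof (ln_le_sub1 2); lra).
   assert (L3 : ln t <= t - 1) by (apply ln_le_sub1; lra).
   assert (L4 : 0 <= ln k1) by (apply ln_nonneg; lra).
   assert (L5 : 0 <= ln 2) by (apply ln_nonneg; lra).
   assert (k1 * ln k1 >= (t - 1) * ln k1) by nra.
   assert ((t - 1) * ln k1 >= (t-1) * (ln t - ln 2)) by nra.
   nra.
Qed.

Lemma Dn_upper N : (1 <= N)%nat ->
  INR (Dn N) <= INR N * (1 + ln (INR N)) * H N - INR N * G N.
Proof. intros HN. unfold Dn. rewrite INR_list_sum.
 apply Rle_trans with (rsum (fun x => INR N * (1 + ln (INR N)) * / INR x - INR N * (ln (INR x) / INR x)) (seq 1 N)).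
 - apply rsum_le. intros x Hx. apply in_seq1 in Hx.
   eapply Rle_trans. apply UB2. apply Nat.Div0.div_le_upper_bound; nia.
   set (K := (N / x)%nat).
   assert (Hx0 : 0 < INR x) by (apply lt_0_INR; lia).
   assert (HxN : INR x <= INR N) by (apply le_INR; lia).
   set (t := INR N / INR x).
   assert (Ht1 : 1 <= t) by (unfold t; apply (Rmult_le_reg_r (INR x)); auto; unfold Rdiv; rewrite Rmult_assoc, Rinv_l; lra).
   assert (Hlt : 0 <= ln t) by (apply ln_nonneg; auto).
   assert (HKt : INR K <= t) by (apply floor_le; lia).
   assert (E : INR N * (1 + ln (INR N)) * / INR x - INR N * (ln (INR x) / INR x) = t * (1 + ln t)).
   { unfold t. rewrite ln_div' by lra. field. lra. }
   rewrite E. destruct (Nat.eq_dec K 0) as [E0|E0].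
   + rewrite E0. simpl. nra.
   + assert (1 <= INR K) by (change 1 with (INR 1); apply le_INR; lia).
     assert (ln (INR K) <= ln t) by (apply ln_le_mono; lra).
     assert (0 <= ln (INR K)) by (apply ln_nonneg; lra). nra.
 - rewrite rsum_minus, rsum_scal, rsum_scal. unfold H, G. lra.
Qed.

Lemma En_lower N :
  INR (S N) * (ln (INR (S N)) - 5) * (H (S N) - 1) - INR (S N) * G (S N) <= INR (En N).
Proof. unfold En. rewrite INR_list_sum.
 apply Rle_trans with (rsum (fun x => INR (S N) * (ln (INR (S N)) - 5) * / INR (S x) - INR (S N) * (ln (INR (S x)) / INR (S x))) (seq 1 N)).
 - rewrite rsum_minus, rsum_scal, rsum_scal.
   pose proof (rsum_shift (fun a => / INR a) N) as Sh1. cbv beta in Sh1. fold (H (S N)) in Sh1.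
   change (INR 1) with 1 in Sh1. rewrite Rinv_1 in Sh1.
   pose proof (rsum_shift (fun a => ln (INR a) / INR a) N) as Sh2. cbv beta in Sh2. fold (G (S N)) in Sh2.
   change (INR 1) with 1 in Sh2. rewrite ln_1 in Sh2.
   unfold Rdiv in Sh2 at 1. rewrite Rmult_0_l in Sh2.
   rewrite Sh1, Sh2. lra.
 - apply rsum_le. intros x Hx. apply in_seq1 in Hx.
   eapply Rle_trans. 2: apply LB2.
   2:{ apply Nat.Div0.div_le_upper_bound; nia. }
   set (K := (S N / (x+1))%nat).
   assert (Hx0 : 0 < INR (S x)) by (apply lt_0_INR; lia).
   assert (HM : 0 < INR (S N)) by (apply lt_0_INR; lia).
   set (t := INR (S N) / INR (S x)).
   assert (Ht : 0 < t) by (unfold t; apply Rdiv_lt_0_compat; auto).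
   assert (HKt : INR K <= t) by (unfold t, K; replace (S x) with (x+1)%nat by lia; apply floor_le; lia).
   assert (HKt2 : t < INR K + 1) by (unfold t, K; replace (S x) with (x+1)%nat by lia; pose proof (floor_gt (S N) (x+1) ltac:(lia)); lra).
   eapply Rle_trans. 2: apply (PHI K t Ht (conj HKt HKt2)).
   right. unfold t. rewrite ln_div' by lra. field. lra.
Qed.

Lemma main_bounds N : (1 <= N)%nat -> 12 <= ln (INR N) ->
  INR N * (ln (INR N) ^ 2 / 2 - 6 * ln (INR N)) <= INR (sumR3 N) <=
  INR N * (ln (INR N) ^ 2 / 2 + 3 * ln (INR N) + 2).
Proof. intros HN HL. rewrite sumR3_S3. set (L := ln (INR N)) in *.
 assert (HN0 : 1 <= INR N) by (change 1 with (INR 1); apply le_INR; lia).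
 split.
 - eapply Rle_trans. 2: apply le_INR, S3_lower.
   eapply Rle_trans. 2: apply En_lower.
   set (M := INR (S N)). set (Lm := ln M).
   assert (HM : M = INR N + 1) by (unfold M; apply S_INR).
   assert (HLm : L <= Lm) by (unfold Lm, L; apply ln_le_mono; lra).
   pose proof (H_lower (S N)) as Hh. fold M in Hh.
   assert (Hlm1 : Lm <= ln (M + 1)) by (unfold Lm; apply ln_le_mono; lra).
   destruct (G_bounds (S N) ltac:(lia)) as [G1 _]. fold M Lm in G1.
   assert (Hinv : 0 < / M) by (apply Rinv_0_lt_compat; lra).
   assert (P1 : (Lm - 5) * (Lm - 1) <= (Lm - 5) * (H (S N) - 1)) by nra.
   assert (P2 : M * (Lm^2/2 - 6*Lm + 4) <= M * (Lm - 5) * (H (S N) - 1) - M * G (S N)) by nra.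
   assert (P3 : INR N * (L^2/2 - 6*L) <= M * (Lm^2/2 - 6*Lm + 4)).
   { assert (L^2/2 - 6*L <= Lm^2/2 - 6*Lm + 4) by nra. nra. }
   lra.
 - eapply Rle_trans. apply le_INR, S3_upper.
   eapply Rle_trans. apply Dn_upper; auto.
   pose proof (H_upper N HN) as Hu. destruct (G_bounds N HN) as [_ G2]. fold L in Hu, G2.
   assert (Q1 : INR N * (L^2/2 - H N) <= INR N * G N) by (apply Rmult_le_compat_l; lra).
   assert (Q2 : INR N * (2 + L) * H N <= INR N * (2 + L) * (1 + L)) by (apply Rmult_le_compat_l; nra).
   fold L. nra.
Qed.

Lemma exists_nat_gt x : exists n : nat, x < INR n.
Proof. destruct (archimed (Rabs x)) as [H1 _].
 exists (Z.to_nat (up (Rabs x))).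
 assert (0 <= up (Rabs x))%Z.
 { apply le_IZR. pose proof (Rabs_pos x). lra. }
 rewrite INR_IZR_INZ, Z2Nat.id by auto. pose proof (Rle_abs x). lra. Qed.

Theorem theorem1 :
  Un_cv (fun N : nat =>
           (INR (sumR3 N) / INR N) / ((ln (INR N)) ^ 2 / 2)) 1.
Proof.
 intros eps Heps.
 destruct (exists_nat_gt (exp (12 + 12/eps))) as [N0 HN0].
 exists N0. intros n Hn. unfold R_dist.
 assert (Hn0 : INR N0 <= INR n) by (apply le_INR; lia).
 pose proof (exp_pos (12 + 12/eps)).
 assert (Hpos : 0 < INR n) by lra.
 assert (HL : 12 + 12/eps < ln (INR n)).
 { rewrite <- (ln_exp (12+12/eps)). apply ln_increasing; lra. }
 assert (H1n : (1 <= n)%nat) by (destruct n; [simpl in Hpos; lra | lia]).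
 assert (He : 0 < 12/eps) by (apply Rdiv_lt_0_compat; lra).
 destruct (main_bounds n H1n ltac:(lra)) as [B1 B2].
 set (L := ln (INR n)) in *.
 set (A := INR (sumR3 n)) in *.
 set (q := A / INR n).
 assert (Hq1 : L^2/2 - 6*L <= q).
 { unfold q. apply (Rmult_le_reg_r (INR n)); auto. unfold Rdiv. rewrite Rmult_assoc, Rinv_l by lra. lra. }
 assert (Hq2 : q <= L^2/2 + 3*L + 2).
 { unfold q. apply (Rmult_le_reg_r (INR n)); auto. unfold Rdiv. rewrite Rmult_assoc, Rinv_l by lra. lra. }
 set (r := q / (L^2/2)).
 assert (Hr : r * L^2 = 2 * q) by (unfold r; field; lra).
 assert (HeL : 12 < eps * L).
 { assert (12 / eps * eps = 12) by (field; lra). nra. }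
 assert (Hup : (r - 1) * L^2 <= 12 * L) by nra.
 assert (Hlo : - (12 * L) <= (r - 1) * L^2) by nra.
 apply Rabs_def1.
 - assert ((r - 1) * L <= 12) by nra. nra.
 - assert (-12 <= (r - 1) * L) by nra. nra.
Qed.
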